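(* Let $X$ be a real Banach space, considered with its weak topology, and let $X^*$ be its dual with the weak$^*$ topology; finite powers carry the product topologies. Let $\kappa$ be an infinite cardinal. Then $hL(X^n)\leq\kappa$ for every $n\in\mathbb N$ if and only if $hd((X^* )^n)\leq\kappa$ for every $n\in\mathbb N$.
   Context: $hd(Z)=\sup\{d(Y):Y\subseteq Z\}$ with $d(Y)$ the least size of a dense subset of $Y$; $hL(Z)=\sup\{L(Y):Y\subseteq Z\}$ with $L(Y)$ the least $\kappa$ such that every open cover of $Y$ has a subcover of size at most $\kappa$. The weak topology on $X$ is generated by the functionals in $X^*$; the weak$^*$ topology on $X^*$ is generated by the evaluations at points of $X$. *)

(* Defs.v *)
From Stdlib Require Import Reals List.
Open Scope R_scope.

Record Banach := {
  carrier :> Type;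
  vzero : carrier;
  vadd : carrier -> carrier -> carrier;
  vopp : carrier -> carrier;
  vscal : R -> carrier -> carrier;
  vnorm : carrier -> R;
  vadd_assoc : forall x y z, vadd x (vadd y z) = vadd (vadd x y) z;
  vadd_comm : forall x y, vadd x y = vadd y x;
  vadd_0 : forall x, vadd x vzero = x;
  vadd_opp : forall x, vadd x (vopp x) = vzero;
  vscal_1 : forall x, vscal 1 x = x;
  vscal_assoc : forall a b x, vscal a (vscal b x) = vscal (a * b) x;
  vscal_distr_v : forall a x y, vscal a (vadd x y) = vadd (vscal a x) (vscal a y);
  vscal_distr_s : forall a b x, vscal (a + b) x = vadd (vscal a x) (vscal b x);
  vnorm_nonneg : forall x, 0 <= vnorm x;
  vnorm_eq0 : forall x, vnorm x = 0 -> x = vzero;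
  vnorm_scal : forall a x, vnorm (vscal a x) = Rabs a * vnorm x;
  vnorm_triangle : forall x y, vnorm (vadd x y) <= vnorm x + vnorm y;
  vcomplete : forall u : nat -> carrier,
    (forall eps, eps > 0 -> exists N, forall m n, (N <= m)%nat -> (N <= n)%nat ->
        vnorm (vadd (u m) (vopp (u n))) < eps) ->
    exists l, forall eps, eps > 0 -> exists N, forall n, (N <= n)%nat ->
        vnorm (vadd (u n) (vopp l)) < eps
}.

Definition is_dual_elt (X : Banach) (f : X -> R) : Prop :=
  (forall x y, f (vadd X x y) = f x + f y) /\
  (forall a x, f (vscal X a x) = a * f x) /\
  (exists C, forall x, Rabs (f x) <= C * vnorm X x).

Definition Dual (X : Banach) : Type := { f : X -> R | is_dual_elt X f }.

Definition init_open {T I : Type} (F : I -> T -> R) (U : T -> Prop) : Prop :=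
  forall x, U x -> exists (l : list I) (eps : R), eps > 0 /\
    forall y, (forall i, In i l -> Rabs (F i y - F i x) < eps) -> U y.

(* Finite powers T^n, and the product of the initial topology
   (= initial topology of the family f(pi_k x)). *)
Fixpoint pow (T : Type) (n : nat) : Type :=
  match n with O => unit | S m => (T * pow T m)%type end.

Fixpoint powI (I : Type) (n : nat) : Type :=
  match n with O => Empty_set | S m => (I + powI I m)%type end.

Fixpoint powF {T I : Type} (F : I -> T -> R) (n : nat) : powI I n -> pow T n -> R :=
  match n as n0 return powI I n0 -> pow T n0 -> R with
  | O => fun i _ => match i with end
  | S m => fun i x => match i with
                      | inl j => F j (fst x)
                      | inr j => powF F m j (snd x)
                      end
  end.

Definition weak_family (X : Banach) : Dual X -> X -> R := fun f x => proj1_sig f x.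
Definition weakstar_family (X : Banach) : X -> Dual X -> R := fun x f => proj1_sig f x.

Definition card_le (A K : Type) : Prop := exists f : A -> K, forall a b, f a = f b -> a = b.
Definition infinite_type (K : Type) : Prop := exists f : nat -> K, forall a b, f a = f b -> a = b.

Definition hL_le {T : Type} (op : (T -> Prop) -> Prop) (K : Type) : Prop :=
  forall (Y : T -> Prop) (J : Type) (U : J -> T -> Prop),
    (forall j, op (U j)) -> (forall y, Y y -> exists j, U j y) ->
    exists S : J -> Prop, card_le {j | S j} K /\
      forall y, Y y -> exists j, S j /\ U j y.

Definition hd_le {T : Type} (op : (T -> Prop) -> Prop) (K : Type) : Prop :=
  forall Y : T -> Prop, exists D : T -> Prop,
    (forall x, D x -> Y x) /\ card_le {x | D x} K /\
    forall U, op U -> (exists y, Y y /\ U y) -> exists d, D d /\ U d.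

(* Main.v *)
Require Import Defs.
From Stdlib Require Import Reals List Cantor.
From mathcomp Require all_boot classical_sets boolp functions cardinality.
From mathcomp Require zify.

Module CardZ.
Import all_boot classical_sets boolp functions cardinality zify.
Local Open Scope classical_set_scope. Local Open Scope card_scope.

Lemma inj_of_card K (C : set K) : [set: nat] #<= C -> exists j : nat -> K, (forall n, C (j n)) /\ forall a b, j a = j b -> a = b.
Proof.
move/card_leP => [f].
have h : forall n : nat, n \in [set: nat] by move=> n; rewrite in_setT.
exists (fun n => val (f (exist _ n (h n)))); split.
  move=> n. have := valP (f (exist _ n (h n))). by rewrite inE.
move=> a b E.
have : f (exist _ a (h a)) = f (exist _ b (h b)) by apply: val_inj.
move/(@inj _ _ _ f). rewrite !in_setT => /(_ isT isT) [] //.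
Qed.

Lemma cantor_ex : exists (f : nat * nat -> nat) (g : nat -> nat * nat), (forall p, g (f p) = p) /\ (forall n, f (g n) = n).
Proof. exists Cantor.to_nat, Cantor.of_nat; split; [exact Cantor.cancel_of_to | exact Cantor.cancel_to_of]. Qed.

Section S.
Variable K : Type.
Definition TT := ((nat * K) * K)%type.
Definition PF (G : set TT) := forall p a a', G (p,a) -> G (p,a') -> a = a'.
Definition PI (G : set TT) := forall p p' a, G (p,a) -> G (p',a) -> p = p'.
Definition Ar (G:set TT) (b:K) := exists p, G (p,b).
Definition PD (G : set TT) := forall n b, Ar G b -> exists a, G ((n,b),a).
Definition PR (G : set TT) := forall n b a, G ((n,b),a) -> Ar G b.
Definition PP G := PF G /\ PI G /\ PD G /\ PR G.

Lemma chainP (F : set (set TT)) : F `<=` PP -> total_on F subset -> PP (\bigcup_(X in F) X).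
Proof.
move=> FP tot; split; [|split; [|split]].
- move=> p a a' [X FX Xa] [Y FY Ya'].
  case: (tot _ _ FX FY) => [XY|YX].
  + exact: (proj1 (FP _ FY)) p a a' (XY _ Xa) Ya'.
  + exact: (proj1 (FP _ FX)) p a a' Xa (YX _ Ya').
- move=> p p' a [X FX Xa] [Y FY Ya'].
  case: (tot _ _ FX FY) => [XY|YX].
  + exact: (proj1 (proj2 (FP _ FY))) p p' a (XY _ Xa) Ya'.
  + exact: (proj1 (proj2 (FP _ FX))) p p' a Xa (YX _ Ya').
- move=> n b [p [X FX Xp]].
  have [a Ha] := (proj1 (proj2 (proj2 (FP _ FX)))) n b (ex_intro _ p Xp).
  by exists a; exists X.
- move=> n b a [X FX Xa].
  have [p Hp] := (proj2 (proj2 (proj2 (FP _ FX)))) n b a Xa.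
  by exists p; exists X.
Qed.

Lemma nat_prod_le (k0 : K) (e : nat -> K) (einj : forall a b, e a = e b -> a = b) :
  exists F : nat * K -> K, forall p q, F p = F q -> p = q.
Proof.
have [cp [cq [cqp cpq]]] := cantor_ex.
have [G [PG Gmax]] := Zorn_bigcup chainP.
case: PG => [GF [GI [GD GR]]].
pose C := fun b => ~ Ar G b.
have noinj : forall j : nat -> K, (forall n, C (j n)) -> (forall a b, j a = j b -> a = b) -> False.
  move=> j jC jinj.
  pose H : set TT := fun t => G t \/ exists n m, t = ((n, j m), j (cp (n,m))).
  apply: (Gmax H); last first.
    split; [|split; [|split]].
    - move=> p a a' [Ha|[n [m Ha]]] [Ha'|[n' [m' Ha']]].
      + exact: GF Ha Ha'.
      + case: Ha' => Ep Ea; subst p. by case: (jC m' (GR _ _ _ Ha)).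
      + case: Ha => Ep Ea; subst p. by case: (jC m (GR _ _ _ Ha')).
      + case: Ha => Ep Ea; case: Ha' => Ep' Ea'; subst.
        case: Ep' => <- /jinj <-. by [].
    - move=> p p' a [Ha|[n [m Ha]]] [Ha'|[n' [m' Ha']]].
      + exact: GI Ha Ha'.
      + case: Ha' => Ep Ea; subst. by case: (jC _ (ex_intro _ p Ha)).
      + case: Ha => Ep Ea; subst. by case: (jC _ (ex_intro _ p' Ha')).
      + case: Ha => Ep Ea; case: Ha' => Ep' Ea'; subst.
        move: Ea' => /jinj /(f_equal cq).
        rewrite !cqp. by case=> -> ->.
    - move=> n b [p [Hp|[n' [m' Hp]]]].
      + have [a Ha] := GD n b (ex_intro _ p Hp). by exists a; left.
      + case: Hp => Ep Eb; subst.
        exists (j (cp (n, cp (n', m')))); right.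
        by exists n, (cp (n', m')).
    - move=> n b a [Ha|[n' [m' Ha]]].
      + have [p Hp] := GR _ _ _ Ha. by exists p; left.
      + case: Ha => En Eb Ea; subst.
        case E: (cq m') => [u v].
        exists (u, j v); right; exists u, v.
        by rewrite -E cpq.
  split; first by move=> t Gt; left.
  move=> sub.
  have : H ((0%N, j 0%N), j (cp (0%N,0%N))) by right; exists 0%N, 0%N.
  move/sub => G0. exact: (jC 0%N (GR _ _ _ G0)).
have Cfin : finite_set C.
  apply: contrapT => /infiniteP /inj_of_card [j [jC jinj]].
  exact: noinj jC jinj.
have [c cinj] := countable_injP _ (finite_set_countable Cfin).
have [a0 Aa0] : exists a0, Ar G a0.
  apply: contrapT => nA. apply: (noinj e) => // n An. apply: nA. by exists (e n).
have /all_sig[g Hg] : forall p : nat * K, {a | Ar G p.2 -> G (p,a)}.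
  move=> p. apply: cid. case: (pselect (Ar G p.2)) => h.
    have [a Ha] := GD p.1 p.2 h. exists a => _. by case: p h Ha.
  by exists k0.
pose F := fun p : nat * K => if pselect (Ar G p.2) then g ((2 * p.1)%N, p.2)
  else g ((2 * cp (p.1, c p.2) + 1)%N, a0).
exists F => [[n b] [n' b']]. rewrite /F /=.
case: (pselect (Ar G b)) => hb; case: (pselect (Ar G b')) => hb' /= E.
- have H1 := Hg ((2*n)%N, b) hb. rewrite E in H1.
  have := GI _ _ _ H1 (Hg ((2*n')%N, b') hb'). case=> h1 h2; subst. f_equal. lia.
- have H1 := Hg ((2*n)%N, b) hb. rewrite E in H1.
  have := GI _ _ _ H1 (Hg ((2 * cp (n', c b') + 1)%N, a0) Aa0). case=> h1 h2. lia.
- have H1 := Hg ((2*n')%N, b') hb'. rewrite -E in H1.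
  have := GI _ _ _ H1 (Hg ((2 * cp (n, c b) + 1)%N, a0) Aa0). case=> h1 h2. lia.
- have H1 := Hg ((2 * cp (n, c b) + 1)%N, a0) Aa0. rewrite E in H1.
  have := GI _ _ _ H1 (Hg ((2 * cp (n', c b') + 1)%N, a0) Aa0). case=> h1.
  have h2 : cp (n, c b) = cp (n', c b') by lia.
  move: h2 => /(f_equal cq). rewrite !cqp. case=> -> h3.
  f_equal. apply: cinj => //; exact: mem_set.
Qed.
End S.
End CardZ.
From Stdlib Require Import Lia Lra ClassicalEpsilon ProofIrrelevance ZArith.
Open Scope R_scope.

Section Gen.
Context {T I : Type} (F : I -> T -> R).

Lemma open_ext (A B : T -> Prop) : (forall x, A x <-> B x) -> init_open F A -> init_open F B.
Proof. intros H HA x Bx. destruct (HA x (proj2 (H x) Bx)) as [l [eps [He Hl]]]. exists l, eps. split; auto. intros y Hy. apply H, Hl, Hy. Qed.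

Lemma open_true : init_open F (fun _ => True).
Proof. intros x _. exists nil, 1. split; [lra| auto]. Qed.

Lemma open_and A B : init_open F A -> init_open F B -> init_open F (fun x => A x /\ B x).
Proof.
 intros HA HB x [Ax Bx]. destruct (HA x Ax) as [l1 [e1 [He1 H1]]]. destruct (HB x Bx) as [l2 [e2 [He2 H2]]].
 exists (l1 ++ l2), (Rmin e1 e2). split. apply Rmin_pos; auto.
 intros y Hy; split; [apply H1 | apply H2]; intros i Hi; eapply Rlt_le_trans;
   try (apply Hy; apply in_or_app; auto); [apply Rmin_l | apply Rmin_r].
Qed.

Lemma open_basic i r d : init_open F (fun x => Rabs (F i x - r) < d).
Proof.
 intros x Hx. exists (i :: nil), (d - Rabs (F i x - r)). split. lra.
 intros y Hy. specialize (Hy i (or_introl eq_refl)).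
 replace (F i y - r) with ((F i y - F i x) + (F i x - r)) by ring.
 eapply Rle_lt_trans. apply Rabs_triang. lra.
Qed.

Lemma open_guard (P : Prop) A : (P -> init_open F A) -> init_open F (fun x => P /\ A x).
Proof. intros H x [p Ax]. destruct (H p x Ax) as [l [e [He Hl]]]. exists l, e; split; auto. Qed.

Lemma open_forall (A : nat -> T -> Prop) k : (forall i, (i < k)%nat -> init_open F (A i)) -> init_open F (fun x => forall i, (i < k)%nat -> A i x).
Proof.
 induction k; intros HA.
 - apply open_ext with (fun _ => True). intros; split; auto; intros; lia. apply open_true.
 - apply open_ext with (fun x => (forall i, (i<k)%nat -> A i x) /\ A k x).
   + intros x; split.
     * intros [H1 H2] i Hi. destruct (Nat.eq_dec i k). subst; auto. apply H1; lia.
     * intros H; split; auto.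
   + apply open_and; auto.
Qed.
End Gen.

Fixpoint nthp {T} (d : T) (n : nat) : nat -> Defs.pow T n -> T :=
  match n as n0 return nat -> Defs.pow T n0 -> T with
  | O => fun _ _ => d
  | S m => fun c x => match c with O => fst x | S c' => nthp d m c' (snd x) end
  end.
Fixpoint icoord {I} (n : nat) : powI I n -> nat :=
  match n as n0 return powI I n0 -> nat with
  | O => fun i => match i with end
  | S m => fun i => match i with inl _ => O | inr j => S (icoord m j) end end.
Fixpoint ibase {I} (n : nat) : powI I n -> I :=
  match n as n0 return powI I n0 -> I with
  | O => fun i => match i with end
  | S m => fun i => match i with inl a => a | inr j => ibase m j end end.
Fixpoint fromL {T} (d : T) (k : nat) (l : list T) : Defs.pow T k :=
  match k with O => tt | S k' => (hd d l, fromL d k' (tl l)) end.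

Lemma powF_eq {T I} (F : I -> T -> R) d n (i : powI I n) x :
  powF F n i x = F (ibase n i) (nthp d n (icoord n i) x).
Proof. induction n; simpl. destruct i. destruct i; simpl; auto. Qed.

Lemma mkidx {T I} (F : I -> T -> R) d n c (a : I) : (c < n)%nat ->
  exists i : powI I n, forall x, powF F n i x = F a (nthp d n c x).
Proof.
 revert c; induction n; intros c Hc. lia. destruct c. exists (inl a); auto.
 destruct (IHn c) as [i Hi]. lia. exists (inr i). intros x; simpl. apply Hi.
Qed.

Lemma nthp_fromL {T} (d : T) k l i : (i < k)%nat -> nthp d k i (fromL d k l) = nth i l d.
Proof.
 revert l i; induction k; intros l i H. lia.
 destruct i; destruct l; simpl; try reflexivity.
 - rewrite IHk by lia. destruct i; reflexivity.
 - apply IHk; lia.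
Qed.

Lemma open_coord {T I} (F : I -> T -> R) d n c a r e : (c < n)%nat ->
  init_open (powF F n) (fun x => Rabs (F a (nthp d n c x) - r) < e).
Proof.
 intros Hc. destruct (mkidx F d n c a Hc) as [i Hi].
 apply open_ext with (fun x => Rabs (powF F n i x - r) < e).
 intros x; rewrite Hi; tauto. apply open_basic.
Qed.

Lemma nthmap {A B} (f : A -> B) l i a d' : nth_error l i = Some a -> nth i (map f l) d' = f a.
Proof. intros H. apply nth_error_nth. apply map_nth_error. exact H. Qed.

Lemma grid (v : R) (m : nat) : exists z : Z, Rabs (v - IZR z * / INR (S m)) < / INR (S m).
Proof.
 set (N := INR (S m)). assert (HN : 0 < N) by (apply lt_0_INR; lia).
 destruct (archimed (v * N)) as [h1 h2].
 exists (up (v * N) - 1)%Z. rewrite minus_IZR.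
 assert (HNi : N * / N = 1) by (field; lra).
 assert (Hi : 0 < / N) by (apply Rinv_0_lt_compat; lra).
 set (u := IZR (up (v * N))) in *.
 assert (E : v - (u - 1) * / N = (v * N - u + 1) * / N) by (field; lra).
 rewrite E. apply Rabs_def1; nra.
Qed.

Lemma small (e : R) : 0 < e -> exists m : nat, 2 * / INR (S m) < e.
Proof.
 intros He. destruct (archimed_cor1 (e/2)) as [N [h1 h2]]. lra.
 exists (pred N). replace (S (pred N)) with N by lia. lra.
Qed.

Lemma sig_eq {A} {P : A -> Prop} (a b : {x | P x}) : proj1_sig a = proj1_sig b -> a = b.
Proof. destruct a, b; simpl; intros ->. f_equal. apply proof_irrelevance. Qed.

Lemma cid {A} {P : A -> Prop} : (exists x, P x) -> {x | P x}.
Proof. apply constructive_indefinite_description. Qed.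

Lemma card_le_mono {T K} (A B : T -> Prop) : (forall x, A x -> B x) -> card_le {x | B x} K -> card_le {x | A x} K.
Proof.
 intros H [f Hf]. exists (fun a => f (exist _ (proj1_sig a) (H _ (proj2_sig a)))).
 intros a b E. apply Hf in E. apply sig_eq. apply (f_equal (@proj1_sig _ _)) in E. exact E.
Qed.

Lemma card_le_image {T U K} (A : T -> Prop) (f : {x | A x} -> U) :
  card_le {x | A x} K -> card_le {y | exists t, y = f t} K.
Proof.
 intros [h Hh].
 exists (fun y : {y | exists t, y = f t} => h (proj1_sig (@cid _ (fun t => proj1_sig y = f t) (proj2_sig y)))).
 intros a b E. apply Hh in E. apply sig_eq.
 rewrite (proj2_sig (@cid _ (fun t => proj1_sig a = f t) (proj2_sig a))), (proj2_sig (@cid _ (fun t => proj1_sig b = f t) (proj2_sig b))), E. reflexivity.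
Qed.

Lemma card_union {T K C} (code : C -> nat) (A : C -> T -> Prop) :
  (exists h : nat * K -> K, forall p q, h p = h q -> p = q) ->
  (forall a b, code a = code b -> a = b) ->
  (forall c, card_le {x | A c x} K) -> card_le {x | exists c, A c x} K.
Proof.
 intros [h Hh] Hc HA.
 pose (hc := fun c => proj1_sig (cid (HA c))).
 assert (Hhc : forall c a b, hc c a = hc c b -> a = b) by (intros c; exact (proj2_sig (cid (HA c)))).
 assert (key : forall c1 c2 (a1 : {x | A c1 x}) (a2 : {x | A c2 x}), c1 = c2 -> hc c1 a1 = hc c2 a2 -> proj1_sig a1 = proj1_sig a2).
 { intros c1 c2 a1 a2 E; subst c2. intros E. apply Hhc in E. subst; reflexivity. }
 pose (cc := fun s : {x | exists c, A c x} => @cid _ (fun c => A c (proj1_sig s)) (proj2_sig s)).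
 exists (fun s => h (code (proj1_sig (cc s)), hc (proj1_sig (cc s)) (exist _ (proj1_sig s) (proj2_sig (cc s))))).
 intros a b E. apply Hh in E. injection E as E1 E2. apply Hc in E1.
 apply sig_eq. exact (key _ _ _ _ E1 E2).
Qed.

Definition cp (p : nat * nat) : nat := Cantor.to_nat p.
Lemma cp_inj p q : cp p = cp q -> p = q.
Proof. intros E. apply (f_equal Cantor.of_nat) in E. unfold cp in E. rewrite !Cantor.cancel_of_to in E. exact E. Qed.
Global Opaque cp.

Fixpoint codeL (l : list nat) : nat := match l with nil => O | a :: l' => S (cp (a, codeL l')) end.
Lemma codeL_inj l l' : codeL l = codeL l' -> l = l'.
Proof.
 revert l'; induction l; destruct l'; simpl; intros E; try discriminate; auto.
 apply Nat.succ_inj in E. apply cp_inj in E. injection E as -> E. f_equal; auto.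
Qed.
Definition codeZ (z : Z) : nat := cp (Z.to_nat z, Z.to_nat (- z)).
Lemma codeZ_inj a b : codeZ a = codeZ b -> a = b.
Proof. unfold codeZ; intros E. apply cp_inj in E. injection E as E1 E2. lia. Qed.
Lemma map_inj {A B} (f : A -> B) : (forall a b, f a = f b -> a = b) -> forall l l', map f l = map f l' -> l = l'.
Proof. intros Hf l; induction l; destruct l'; simpl; intros E; try discriminate; auto.
 injection E as E1 E2. f_equal; auto. Qed.

Definition Cl := (list nat * nat * list Z)%type.
Definition codeC (c : Cl) : nat := match c with (cs, m, zs) => cp (codeL cs, cp (m, codeL (map codeZ zs))) end.
Lemma codeC_inj a b : codeC a = codeC b -> a = b.
Proof.
 destruct a as [[cs m] zs], b as [[cs' m'] zs']; simpl; intros E.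
 apply cp_inj in E. injection E as E1 E2. apply cp_inj in E2. injection E2 as E2 E3.
 apply codeL_inj in E1. apply codeL_inj in E3. apply (map_inj _ codeZ_inj) in E3. subst; reflexivity.
Qed.

Lemma zeroD_pf (X : Banach) : is_dual_elt X (fun _ => 0).
Proof. split; [|split]. intros; ring. intros; ring. exists 0. intros; rewrite Rabs_R0; lra. Qed.
Definition zeroD (X : Banach) : Dual X := exist _ (fun _ => 0) (zeroD_pf X).

Lemma close a b r d e : Rabs (a - r) < d -> Rabs (b - r) < d -> 2 * d < e -> Rabs (a - b) < e.
Proof.
 intros H1 H2 H3. replace (a - b) with ((a - r) - (b - r)) by ring.
 eapply Rle_lt_trans. apply Rabs_triang. rewrite Rabs_Ropp. lra.
Qed.

Definition zf (m : nat) (v : R) : Z := proj1_sig (cid (grid v m)).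
Lemma zf_spec m v : Rabs (v - IZR (zf m v) * / INR (S m)) < / INR (S m).
Proof. unfold zf. exact (proj2_sig (cid (grid v m))). Qed.

Section Dir.
Variable X : Banach.
Variable K : Type.
Hypothesis HNK : exists h : nat * K -> K, forall p q, h p = h q -> p = q.

Definition Vc n (cs : list nat) (m : nat) (zs : list Z) (g : Defs.pow (Dual X) n) (x : Defs.pow X (length cs)) : Prop :=
  forall i, (i < length cs)%nat -> Rabs (proj1_sig (nthp (zeroD X) n (nth i cs O) g) (nthp (vzero X) (length cs) i x) - IZR (nth i zs 0%Z) * / INR (S m)) < / INR (S m).

Lemma Vc_open n cs m zs g : init_open (powF (weak_family X) (length cs)) (Vc n cs m zs g).
Proof.
 apply open_forall. intros i Hi.
 exact (open_coord (weak_family X) (vzero X) (length cs) i (nthp (zeroD X) n (nth i cs O) g) _ _ Hi).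
Qed.

Lemma dir1 : (forall n, hL_le (init_open (powF (weak_family X) n)) K) -> forall n, hd_le (init_open (powF (weakstar_family X) n)) K.
Proof.
 intros HL n Y.
 assert (Hcl : forall (c : Cl), exists S : Defs.pow (Dual X) n -> Prop, card_le {g | S g} K /\ (forall g, S g -> Y g) /\
    forall x g, Y g -> Vc n (fst (fst c)) (snd (fst c)) (snd c) g x -> exists h, S h /\ Vc n (fst (fst c)) (snd (fst c)) (snd c) h x).
 { intros [[cs m] zs]; simpl.
   destruct (HL (length cs) (fun x => exists g, Y g /\ Vc n cs m zs g x) (Defs.pow (Dual X) n) (fun g x => Y g /\ Vc n cs m zs g x)) as [S [HS1 HS2]].
   - intros g. apply open_guard. intros _. apply Vc_open.
   - intros y [g Hg]. exists g; exact Hg.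
   - exists (fun g => S g /\ Y g). split; [|split].
     + eapply card_le_mono; [|exact HS1]. intros g [h _]; exact h.
     + intros g [_ h]; exact h.
     + intros x g Yg Vg. destruct (HS2 x (ex_intro _ g (conj Yg Vg))) as [h [Sh [Yh Vh]]]. exists h; auto. }
 destruct (ClassicalEpsilon.choice _ Hcl) as [Sf HSf].
 exists (fun g => Y g /\ exists c, Sf c g). split; [|split].
 - intros g [h _]; exact h.
 - eapply card_le_mono; [|apply (card_union codeC (fun c g => Sf c g) HNK codeC_inj (fun c => proj1 (HSf c)))].
   intros g [_ h]; exact h.
 - intros U HU [y [Yy Uy]]. destruct (HU y Uy) as [L [eps [He HL']]]. destruct (small eps He) as [m Hm].
   set (cs := map (icoord n) L).
   set (vv := fun i => proj1_sig (nthp (zeroD X) n (icoord n i) y) (ibase n i)).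
   set (zs := map (fun i => zf m (vv i)) L).
   set (x := fromL (vzero X) (length cs) (map (ibase n) L)).
   assert (Hlen : length cs = length L) by (unfold cs; apply length_map).
   assert (facts : forall i a, nth_error L i = Some a -> (i < length cs)%nat /\ nth i cs O = icoord n a /\
       nthp (vzero X) (length cs) i x = ibase n a /\ nth i zs 0%Z = zf m (vv a)).
   { intros i a E. assert (Hi : (i < length cs)%nat) by (rewrite Hlen; apply nth_error_Some; congruence).
     split; [exact Hi|split; [|split]].
     - unfold cs. apply nthmap. exact E.
     - unfold x. rewrite nthp_fromL by exact Hi. apply nthmap. exact E.
     - unfold zs. apply (nthmap (fun i => zf m (vv i))). exact E. }
   assert (Vy : Vc n cs m zs y x).
   { intros i Hi. destruct (nth_error L i) as [a|] eqn:E.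
     - destruct (facts i a E) as [_ [F1 [F2 F3]]]. rewrite F1, F2, F3. apply zf_spec.
     - apply nth_error_None in E. lia. }
   destruct (proj2 (proj2 (HSf (cs,m,zs))) x y Yy Vy) as [h [Sh Vh]]. simpl in Sh, Vh.
   exists h. split.
   + split. exact (proj1 (proj2 (HSf _)) h Sh). exists (cs, m, zs); exact Sh.
   + apply HL'. intros a Ha.
     destruct (In_nth_error _ _ Ha) as [i Hi].
     destruct (facts i a Hi) as [F0 [F1 [F2 F3]]].
     specialize (Vh i F0). specialize (Vy i F0). rewrite F1, F2, F3 in Vh, Vy.
     rewrite (powF_eq _ (zeroD X) n a h), (powF_eq _ (zeroD X) n a y).
     exact (close _ _ _ _ _ Vh Vy Hm).
Qed.
End Dir.

Lemma close2 a b r d : Rabs (a - r) < d -> Rabs (b - r) < d -> Rabs (a - b) < 2 * d.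
Proof.
 intros H1 H2. replace (a - b) with ((a - r) - (b - r)) by ring.
 eapply Rle_lt_trans. apply Rabs_triang. rewrite Rabs_Ropp. lra.
Qed.

Section Dir2.
Variable X : Banach.
Variable K : Type.
Hypothesis HNK : exists h : nat * K -> K, forall p q, h p = h q -> p = q.

Lemma dir2 : (forall n, hd_le (init_open (powF (weakstar_family X) n)) K) -> forall n, hL_le (init_open (powF (weak_family X) n)) K.
Proof.
 intros HD n Y J U HU Hcov.
 assert (Hdat : forall s : {y | Y y}, exists p : J * list (powI (Dual X) n) * nat,
    U (fst (fst p)) (proj1_sig s) /\
    forall w, (forall i, In i (snd (fst p)) -> Rabs (powF (weak_family X) n i w - powF (weak_family X) n i (proj1_sig s)) < 2 * / INR (S (snd p))) -> U (fst (fst p)) w).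
 { intros [y Yy]. destruct (Hcov y Yy) as [j Uj]. destruct (HU j y Uj) as [L [eps [He HL]]].
   destruct (small eps He) as [m Hm]. exists (j, L, m). simpl. split; auto.
   intros w Hw. apply HL. intros i Hi. eapply Rlt_trans; [exact (Hw i Hi) | exact Hm]. }
 destruct (ClassicalEpsilon.choice _ Hdat) as [df Hdf].
 set (jf := fun s => fst (fst (df s))).
 set (Lf := fun s => snd (fst (df s))).
 set (mf := fun s => snd (df s)).
 set (vv := fun (s : {y | Y y}) (i : powI (Dual X) n) => proj1_sig (ibase n i : Dual X) (nthp (vzero X) n (icoord n i) (proj1_sig s))).
 set (clf := fun s => (map (icoord n) (Lf s), mf s, map (fun i => zf (mf s) (vv s i)) (Lf s)) : Cl).
 assert (Hcl : forall c : Cl, exists S : J -> Prop, card_le {j | S j} K /\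
    forall s, clf s = c -> exists j, S j /\ U j (proj1_sig s)).
 { intros [[cs m] zs]. set (k := length cs).
   assert (facts : forall s', clf s' = (cs, m, zs) -> forall i a, nth_error (Lf s') i = Some a ->
      (i < k)%nat /\ nth i cs O = icoord n a /\
      nthp (zeroD X) k i (fromL (zeroD X) k (map (ibase n) (Lf s'))) = ibase n a /\
      nth i zs 0%Z = zf m (vv s' a) /\ mf s' = m).
   { intros s' Hc i a E. unfold clf in Hc. injection Hc as Ecs Em Ezs.
     assert (Hi : (i < k)%nat).
     { unfold k. rewrite <- Ecs, length_map. apply nth_error_Some; congruence. }
     split; [exact Hi | split; [|split; [|split]]].
     - rewrite <- Ecs. apply nthmap. exact E.
     - rewrite nthp_fromL by exact Hi. apply nthmap. exact E.
     - rewrite <- Ezs, <- Em. apply (nthmap (fun i => zf (mf s') (vv s' i))). exact E.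
     - exact Em. }
   assert (lenL : forall s', clf s' = (cs, m, zs) -> length (Lf s') = k).
   { intros s' Hc. unfold clf in Hc. injection Hc as Ecs Em Ezs. unfold k. rewrite <- Ecs, length_map. reflexivity. }
   set (Y' := fun g : Defs.pow (Dual X) k => exists s, clf s = (cs,m,zs) /\ fromL (zeroD X) k (map (ibase n) (Lf s)) = g).
   destruct (HD k Y') as [D [HD1 [HD2 HD3]]].
   assert (Hsel : forall t : {g | D g}, exists s, clf s = (cs,m,zs) /\ fromL (zeroD X) k (map (ibase n) (Lf s)) = proj1_sig t)
     by (intros [g Dg]; exact (HD1 g Dg)).
   destruct (ClassicalEpsilon.choice _ Hsel) as [sel Hsel'].
   exists (fun j => exists t, j = jf (sel t)). split.
   - exact (card_le_image D (fun t => jf (sel t)) HD2).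
   - intros s Hs.
     set (W := fun g : Defs.pow (Dual X) k => forall i, (i < k)%nat -> Rabs (proj1_sig (nthp (zeroD X) k i g) (nthp (vzero X) n (nth i cs O) (proj1_sig s)) - IZR (nth i zs 0%Z) * / INR (S m)) < / INR (S m)).
     assert (Wo : init_open (powF (weakstar_family X) k) W).
     { apply open_forall; intros i Hi.
       exact (open_coord (weakstar_family X) (zeroD X) k i (nthp (vzero X) n (nth i cs O) (proj1_sig s)) _ _ Hi). }
     assert (Ws : W (fromL (zeroD X) k (map (ibase n) (Lf s)))).
     { intros i Hi. destruct (nth_error (Lf s) i) as [a|] eqn:E.
       - destruct (facts s Hs i a E) as [_ [F1 [F2 [F3 _]]]]. rewrite F1, F2, F3. apply (zf_spec m (vv s a)).
       - apply nth_error_None in E. rewrite (lenL s Hs) in E. lia. }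
     destruct (HD3 W Wo (ex_intro _ _ (conj (ex_intro _ s (conj Hs eq_refl)) Ws))) as [g [Dg Wg]].
     destruct (Hsel' (exist _ g Dg)) as [Hc Hg]. simpl in Hg.
     set (d := sel (exist _ g Dg)) in *.
     exists (jf d). split. exists (exist _ g Dg); reflexivity.
     destruct (Hdf d) as [_ Hnb]. apply Hnb. intros a Ha.
     destruct (In_nth_error _ _ Ha) as [i Hi].
     destruct (facts d Hc i a Hi) as [F0 [F1 [F2 [F3 F4]]]].
     rewrite Hg in F2.
     specialize (Wg i F0). rewrite F1, F2, F3 in Wg.
     pose proof (zf_spec m (vv d a)) as Zd.
     rewrite (powF_eq _ (vzero X) n a (proj1_sig s)), (powF_eq _ (vzero X) n a (proj1_sig d)).
     change (snd (df d)) with (mf d). rewrite F4.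
     exact (close2 _ _ _ _ Wg Zd). }
 destruct (ClassicalEpsilon.choice _ Hcl) as [Sf HSf].
 exists (fun j => exists c, Sf c j). split.
 - exact (card_union codeC (fun c j => Sf c j) HNK codeC_inj (fun c => proj1 (HSf c))).
 - intros y Yy. destruct (proj2 (HSf (clf (exist _ y Yy))) (exist _ y Yy) eq_refl) as [j [Sj Uj]].
   exists j. split; [exists (clf (exist _ y Yy)); exact Sj | exact Uj].
Qed.
End Dir2.

Theorem mainTheorem10 (X : Banach) (K : Type) (HK : infinite_type K) :
  (forall n : nat, hL_le (init_open (powF (weak_family X) n)) K) <->
  (forall n : nat, hd_le (init_open (powF (weakstar_family X) n)) K).
Proof.
  destruct HK as [e einj].
  assert (HNK : exists h : nat * K -> K, forall p q, h p = h q -> p = q)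
    by exact (CardZ.nat_prod_le K (e O) e einj).
  split; [apply dir1 | apply dir2]; exact HNK.
Qed.
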